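(* If $(s_1,s_2,p)\in\Gamma_3$ (respectively $\mathbb G_3$), then $\left(\tfrac{s_1}{3}+\omega\tfrac{s_2}{3},\,\omega p\right)\in\Gamma_2$ (respectively $\mathbb G_2$) for every $\omega\in\mathbb T$.
   Context: $\mathbb G_2=\{(z_1+z_2,z_1z_2):|z_1|,|z_2|<1\}$, $\Gamma_2$ the same with $\le1$; $\mathbb G_3=\{(z_1+z_2+z_3,z_1z_2+z_2z_3+z_3z_1,z_1z_2z_3):|z_i|<1\}$, $\Gamma_3$ the same with $|z_i|\le1$. *)

(* Defs.v *)
From mathcomp Require Import all_boot all_order all_algebra.
From mathcomp Require Import complex.
From mathcomp Require Import reals.
Set Implicit Arguments. Unset Strict Implicit. Unset Printing Implicit Defensive.
Import Order.TTheory GRing.Theory Num.Theory.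
Local Open Scope ring_scope.
Local Open Scope complex_scope.

Definition G2 (R : realType) : R[i] * R[i] -> Prop := fun x =>
  exists z1 z2 : R[i], `|z1| < 1 /\ `|z2| < 1 /\ x = (z1 + z2, z1 * z2).
Definition Gamma2 (R : realType) : R[i] * R[i] -> Prop := fun x =>
  exists z1 z2 : R[i], `|z1| <= 1 /\ `|z2| <= 1 /\ x = (z1 + z2, z1 * z2).

Definition G3 (R : realType) : R[i] * R[i] * R[i] -> Prop := fun x =>
  exists z1 z2 z3 : R[i], `|z1| < 1 /\ `|z2| < 1 /\ `|z3| < 1 /\
    x = (z1 + z2 + z3, z1 * z2 + z2 * z3 + z3 * z1, z1 * z2 * z3).
Definition Gamma3 (R : realType) : R[i] * R[i] * R[i] -> Prop := fun x =>
  exists z1 z2 z3 : R[i], `|z1| <= 1 /\ `|z2| <= 1 /\ `|z3| <= 1 /\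
    x = (z1 + z2 + z3, z1 * z2 + z2 * z3 + z3 * z1, z1 * z2 * z3).

(* Main.v *)
Require Import Defs.
From mathcomp Require Import all_boot all_order all_algebra.
From mathcomp Require Import complex reals.
From mathcomp Require Import ring.
Import GRing.Theory Num.Theory.
Local Open Scope ring_scope.
Import Order.TTheory.
Section Gen.
Variable C : numClosedFieldType.
Implicit Types u b P z y w : C.

Lemma root_contra u b P :
  u ^+ 2 - (b + b^* * P) * u + P = 0 -> `|P| < `|u| ->
  0 <= (`|u| ^+ 2 - 1) * (1 - `|b| ^+ 2) -> u != 0 -> u != b -> False.
Proof.
move=> hr hPu hpos u0 ub.
have e : u * (u - b) = P * (b^* * u - 1).
  apply/eqP; rewrite -subr_eq0 -hr; apply/eqP; ring.
have [h0|h0] := eqVneq (b^* * u - 1) 0.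
  move: e; rewrite h0 mulr0 => /eqP; rewrite mulf_eq0 subr_eq0.
  by rewrite (negbTE u0) (negbTE ub).
have npos : 0 < `|b^* * u - 1| by rewrite normr_gt0.
have id : `|u - b| ^+ 2 - `|b^* * u - 1| ^+ 2 = (`|u| ^+ 2 - 1) * (1 - `|b| ^+ 2).
  rewrite !normCK !(rmorphB, rmorphM, rmorph1) /= conjCK; ring.
have key : `|b^* * u - 1| <= `|u - b|.
  rewrite -ler_sqr ?qualifE ?normr_ge0 //=; by rewrite -subr_ge0 id.
have := congr1 (fun x => `|x|) e; rewrite /= !normrM => e'.
have : `|P| * `|b^* * u - 1| < `|u| * `|u - b|.
  apply: (@lt_le_trans _ _ (`|u| * `|b^* * u - 1|)).
    by rewrite ltr_pM2r.
  by apply: ler_wpM2l.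
by rewrite e' ltxx.
Qed.

Arguments root_contra {u b P}.
Lemma sq_ge1 (x : C) : 1 <= x -> 0 <= x ^+ 2 - 1.
Proof.
move=> h; rewrite (_ : x ^+ 2 - 1 = (x - 1) * (x + 1)); last by ring.
apply: mulr_ge0; first by rewrite subr_ge0.
by apply: addr_ge0 => //; apply: le_trans h.
Qed.

Lemma sq_le1 (x : C) : 0 <= x -> x <= 1 -> 0 <= 1 - x ^+ 2.
Proof.
move=> h0 h; rewrite (_ : 1 - x ^+ 2 = (1 - x) * (1 + x)); last by ring.
by apply: mulr_ge0; [rewrite subr_ge0 | apply: addr_ge0].
Qed.

Lemma root_closed u b P : u ^+ 2 - (b + b^* * P) * u + P = 0 ->
  `|b| <= 1 -> `|P| <= 1 -> `|u| <= 1.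
Proof.
move=> hr hb hP; rewrite real_leNgt ?normr_real ?real1 //; apply/negP => hu.
apply: (root_contra hr).
- by apply: le_lt_trans hu.
- apply: mulr_ge0; first by apply: sq_ge1; apply: ltW.
  by apply: sq_le1.
- by apply/eqP => u0; move: hu; rewrite u0 normr0 ltr10.
- by apply/eqP => ub; move: hu; rewrite ub => hu; have := lt_le_trans hu hb; rewrite ltxx.
Qed.

Arguments root_closed {u b P}.
Lemma root_open u b P : u ^+ 2 - (b + b^* * P) * u + P = 0 ->
  `|b| < 1 -> `|P| < 1 -> `|u| < 1.
Proof.
move=> hr hb hP; rewrite real_ltNge ?normr_real ?real1 //; apply/negP => hu.
apply: (root_contra hr).
- by apply: lt_le_trans hu.
- apply: mulr_ge0; first by apply: sq_ge1.
  by apply: sq_le1 => //; apply: ltW.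
- by apply/eqP => u0; move: hu; rewrite u0 normr0 ler10.
- by apply/eqP => ub; move: hu; rewrite ub => hu; have := le_lt_trans hu hb; rewrite ltxx.
Qed.

Arguments root_open {u b P}.
Lemma roots_exist s P : exists u1 u2 : C, s = u1 + u2 /\ P = u1 * u2.
Proof.
pose r := sqrtC (s ^+ 2 - 4%:R * P).
have hr : r ^+ 2 = s ^+ 2 - 4%:R * P by rewrite sqrtCK.
have h2 : (2%:R : C) != 0 by rewrite pnatr_eq0.
exists ((s + r) / 2%:R), ((s - r) / 2%:R); split; first by field.
rewrite (_ : (s + r) / 2%:R * ((s - r) / 2%:R) = (s ^+ 2 - r ^+ 2) / 4%:R); last by field.
by rewrite hr; field.
Qed.

Lemma beta_closed b P : `|b| <= 1 -> `|P| <= 1 ->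
  exists z1 z2 : C, `|z1| <= 1 /\ `|z2| <= 1 /\ (b + b^* * P, P) = (z1 + z2, z1 * z2).
Proof.
move=> hb hP; have [u1 [u2 [hs hp]]] := roots_exist (b + b^* * P) P.
have hr : forall u, u = u1 \/ u = u2 -> u ^+ 2 - (b + b^* * P) * u + P = 0.
  by move=> u [] ->; rewrite hs hp; ring.
exists u1, u2; split; first by apply: (root_closed (hr u1 (or_introl erefl))).
split; first by apply: (root_closed (hr u2 (or_intror erefl))).
by rewrite -hs -hp.
Qed.

Lemma beta_open b P : `|b| < 1 -> `|P| < 1 ->
  exists z1 z2 : C, `|z1| < 1 /\ `|z2| < 1 /\ (b + b^* * P, P) = (z1 + z2, z1 * z2).
Proof.
move=> hb hP; have [u1 [u2 [hs hp]]] := roots_exist (b + b^* * P) P.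
have hr : forall u, u = u1 \/ u = u2 -> u ^+ 2 - (b + b^* * P) * u + P = 0.
  by move=> u [] ->; rewrite hs hp; ring.
exists u1, u2; split; first by apply: (root_open (hr u1 (or_introl erefl))).
split; first by apply: (root_open (hr u2 (or_intror erefl))).
by rewrite -hs -hp.
Qed.


Arguments beta_closed {b P}.
Arguments beta_open {b P}.
Lemma from_bound s P : `|P| < 1 -> `|s - s^* * P| <= 1 - `|P| ^+ 2 ->
  exists z1 z2 : C, `|z1| <= 1 /\ `|z2| <= 1 /\ (s, P) = (z1 + z2, z1 * z2).
Proof.
move=> hP hs.
have hD : 0 < 1 - P * P^* by rewrite -normCK subr_gt0 exprn_ilt1.
have hD' : 1 - P * P^* != 0 by rewrite gt_eqF.
have hD'' : 1 - P^* * P != 0 by rewrite mulrC.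
pose b := (s - s^* * P) / (1 - P * P^*).
have eb : s = b + b^* * P.
  rewrite /b !(rmorphM, fmorphV, rmorphB, rmorph1) /= !conjCK; field.
  exact: hD''.
have hb : `|b| <= 1.
  rewrite /b normf_div (ger0_norm (ltW hD)) ler_pdivrMr // mul1r -normCK.
  exact: hs.
have [z1 [z2 [h1 [h2 e]]]] := beta_closed hb (ltW (le_lt_trans (lexx _) hP)).
by exists z1, z2; rewrite eb.
Qed.

Lemma from_bound_open s P : `|P| < 1 -> `|s - s^* * P| < 1 - `|P| ^+ 2 ->
  exists z1 z2 : C, `|z1| < 1 /\ `|z2| < 1 /\ (s, P) = (z1 + z2, z1 * z2).
Proof.
move=> hP hs.
have hD : 0 < 1 - P * P^* by rewrite -normCK subr_gt0 exprn_ilt1.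
have hD' : 1 - P * P^* != 0 by rewrite gt_eqF.
have hD'' : 1 - P^* * P != 0 by rewrite mulrC.
pose b := (s - s^* * P) / (1 - P * P^*).
have eb : s = b + b^* * P.
  rewrite /b !(rmorphM, fmorphV, rmorphB, rmorph1) /= !conjCK; field.
  exact: hD''.
have hb : `|b| < 1.
  rewrite /b normf_div (ger0_norm (ltW hD)) ltr_pdivrMr // mul1r -normCK.
  exact: hs.
have [z1 [z2 [h1 [h2 e]]]] := beta_open hb hP.
by exists z1, z2; rewrite eb.
Qed.

Lemma from_circle s P : `|P| = 1 -> s^* * P = s -> `|s| <= 2%:R ->
  exists z1 z2 : C, `|z1| <= 1 /\ `|z2| <= 1 /\ (s, P) = (z1 + z2, z1 * z2).
Proof.
move=> hP hc hs.
have h2 : (2%:R : C) != 0 by rewrite pnatr_eq0.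
pose b := s / 2%:R.
have eb : s = b + b^* * P.
  rewrite /b !(rmorphM, fmorphV, rmorph_nat) /=.
  rewrite (_ : s / 2%:R + s^* / 2%:R * P = s / 2%:R + (s^* * P) / 2%:R); last by field.
  by rewrite hc; field.
have hb : `|b| <= 1.
  by rewrite /b normf_div (ger0_norm (ler0n _ 2)) ler_pdivrMr ?ltr0n // mul1r.
have hP1 : `|P| <= 1 by rewrite hP.
have [z1 [z2 [h1 [h2' e]]]] := beta_closed hb hP1.
by exists z1, z2; rewrite eb.
Qed.

Lemma term_le z y w : `|w| = 1 -> `|z| <= 1 -> `|y| <= 1 ->
  `|z * (1 - y * y^*) + w * (y * (1 - z * z^*))| <= 1 - (`|z| * `|y|) ^+ 2.
Proof.
move=> hw hz hy.
apply: le_trans (ler_normD _ _) _.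
rewrite !normrM hw mul1r -!normCK (ger0_norm (sq_le1 _ (normr_ge0 y) hy)) (ger0_norm (sq_le1 _ (normr_ge0 z) hz)).
rewrite -subr_ge0 (_ : 1 - (`|z| * `|y|) ^+ 2 - (`|z| * (1 - `|y| ^+ 2) + `|y| * (1 - `|z| ^+ 2)) = (1 - `|z|) * (1 - `|y|) * (1 - `|z| * `|y|)); last by ring.
by rewrite !mulr_ge0 // subr_ge0 // mulr_ile1.
Qed.

Lemma term_lt z y w : `|w| = 1 -> `|z| < 1 -> `|y| < 1 ->
  `|z * (1 - y * y^*) + w * (y * (1 - z * z^*))| < 1 - (`|z| * `|y|) ^+ 2.
Proof.
move=> hw hz hy.
apply: le_lt_trans (ler_normD _ _) _.
rewrite !normrM hw mul1r -!normCK (ger0_norm (sq_le1 _ (normr_ge0 y) (ltW hy))) (ger0_norm (sq_le1 _ (normr_ge0 z) (ltW hz))).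
rewrite -subr_gt0 (_ : 1 - (`|z| * `|y|) ^+ 2 - (`|z| * (1 - `|y| ^+ 2) + `|y| * (1 - `|z| ^+ 2)) = (1 - `|z|) * (1 - `|y|) * (1 - `|z| * `|y|)); last by ring.
by rewrite !mulr_gt0 // subr_gt0 // mulr_ilt1.
Qed.

Lemma decomp z1 z2 z3 w : `|w| = 1 ->
  let s := (z1 + z2 + z3) / 3%:R + w * ((z1 * z2 + z2 * z3 + z3 * z1) / 3%:R) in
  let P := w * (z1 * z2 * z3) in
  3%:R * (s - s^* * P) =
    (z1 * (1 - (z2 * z3) * (z2 * z3)^*) + w * ((z2 * z3) * (1 - z1 * z1^*)))
  + (z2 * (1 - (z3 * z1) * (z3 * z1)^*) + w * ((z3 * z1) * (1 - z2 * z2^*)))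
  + (z3 * (1 - (z1 * z2) * (z1 * z2)^*) + w * ((z1 * z2) * (1 - z3 * z3^*))).
Proof.
move=> hw s P.
have ww : w * w^* = 1 by rewrite -normCK hw expr1n.
have h3 : (3%:R : C) != 0 by rewrite pnatr_eq0.
rewrite /s /P !(rmorphM, fmorphV, rmorph_nat, rmorphD) /=.
set K := (z1^* * z2^* + z2^* * z3^* + z3^* * z1^*) * (z1 * z2 * z3).
match goal with |- _ = ?RHS => transitivity (RHS + (1 - w * w^*) * K) end.
  by rewrite /K; field.
set Y := _ * K. have -> : Y = 0.
  rewrite /Y; apply/eqP; rewrite mulf_eq0 subr_eq0; apply/orP; left.
  by apply/eqP; rewrite -ww.
by rewrite addr0.
Qed.


Lemma prod1 (a b c : C) : 0 <= a -> 0 <= b -> 0 <= c -> a <= 1 -> b <= 1 -> c <= 1 ->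
  a * b * c = 1 -> a = 1.
Proof.
move=> a0 b0 c0 a1 b1 c1 e; apply/eqP; rewrite eq_le a1 /=.
move: a1; rewrite [a <= 1]le_eqVlt => /orP [/eqP -> //| alt].
have : a * b * c <= a by rewrite -mulrA ler_piMr // mulr_ile1.
by rewrite e => h; have := le_lt_trans h alt; rewrite ltxx.
Qed.

Lemma norm3 (a b c : C) : `|a| <= 1 -> `|b| <= 1 -> `|c| <= 1 -> `|a + b + c| <= 3%:R.
Proof.
move=> ha hb hc; apply: le_trans (ler_normD _ _) _.
rewrite (_ : 3%:R = 1 + 1 + 1); last by ring.
by apply: lerD => //; apply: le_trans (ler_normD _ _) _; apply: lerD.
Qed.

Lemma main_closed z1 z2 z3 w : `|w| = 1 -> `|z1| <= 1 -> `|z2| <= 1 -> `|z3| <= 1 ->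
  exists u1 u2 : C, `|u1| <= 1 /\ `|u2| <= 1 /\
  ((z1 + z2 + z3) / 3%:R + w * ((z1 * z2 + z2 * z3 + z3 * z1) / 3%:R), w * (z1 * z2 * z3))
   = (u1 + u2, u1 * u2).
Proof.
move=> hw h1 h2 h3.
set s := _ + _; set P := w * _.
have h3p : (0 : C) < 3%:R by rewrite ltr0n.
have hPn : `|P| = `|z1| * `|z2| * `|z3| by rewrite /P !normrM hw mul1r.
have hP1 : `|P| <= 1.
  rewrite hPn -mulrA; apply: mulr_ile1 => //; [exact: mulr_ge0 | exact: mulr_ile1].
have m23 : `|z2 * z3| <= 1 by rewrite normrM mulr_ile1.
have m31 : `|z3 * z1| <= 1 by rewrite normrM mulr_ile1.
have m12 : `|z1 * z2| <= 1 by rewrite normrM mulr_ile1.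
move: hP1; rewrite le_eqVlt => /orP [/eqP heq | hlt].
-
  have a1 : `|z1| = 1 by apply: (@prod1 _ `|z2| `|z3|); rewrite // -hPn.
  have a2 : `|z2| = 1 by apply: (@prod1 _ `|z3| `|z1|); rewrite // -heq hPn; ring.
  have a3 : `|z3| = 1 by apply: (@prod1 _ `|z1| `|z2|); rewrite // -heq hPn; ring.
  have cinv : forall z : C, `|z| = 1 -> z^* = z^-1 /\ z != 0.
    move=> z hz; have zz : z * z^* = 1 by rewrite -normCK hz expr1n.
    have z0 : z != 0 by apply/eqP => z0; move: zz; rewrite z0 mul0r => /eqP; rewrite eq_sym oner_eq0.
    split=> //; apply: (mulfI z0); by rewrite zz mulfV.
  have [c1 n1] := cinv _ a1; have [c2 n2] := cinv _ a2; have [c3 n3] := cinv _ a3.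
  have [cw nw] := cinv _ hw.
  apply: from_circle => //.
    rewrite /s /P !(rmorphM, fmorphV, rmorph_nat, rmorphD) /= c1 c2 c3 cw.
    field; by rewrite ?n1 ?n2 ?n3 ?nw ?pnatr_eq0.
  apply: le_trans (ler_normD _ _) _.
  rewrite (normrM w) hw mul1r !normf_div (ger0_norm (ltW h3p)).
  rewrite (_ : 2%:R = 1 + 1); last by ring.
  apply: lerD; rewrite ler_pdivrMr // mul1r; exact: norm3.
- apply: from_bound => //.
  have D := decomp z1 z2 z3 w hw; rewrite /= -/s -/P in D.
  rewrite -(ler_pM2l h3p) -[X in X * `|_|](ger0_norm (ltW h3p)) -normrM D.
  have T1 := term_le _ _ _ hw h1 m23. 
  have T2 := term_le _ _ _ hw h2 m31. 
  have T3 := term_le _ _ _ hw h3 m12.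
  rewrite !normrM (_ : `|z1| * (`|z2| * `|z3|) = `|P|) in T1; last by rewrite hPn mulrA.
  rewrite !normrM (_ : `|z2| * (`|z3| * `|z1|) = `|P|) in T2; last by rewrite hPn; ring.
  rewrite !normrM (_ : `|z3| * (`|z1| * `|z2|) = `|P|) in T3; last by rewrite hPn; ring.
  apply: le_trans (ler_normD _ _) _.
  rewrite (_ : 3%:R * (1 - `|P| ^+ 2) = (1 - `|P| ^+ 2) + (1 - `|P| ^+ 2) + (1 - `|P| ^+ 2)); last by ring.
  apply: lerD => //; apply: le_trans (ler_normD _ _) _; exact: lerD.
Qed.

Lemma main_open z1 z2 z3 w : `|w| = 1 -> `|z1| < 1 -> `|z2| < 1 -> `|z3| < 1 ->
  exists u1 u2 : C, `|u1| < 1 /\ `|u2| < 1 /\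
  ((z1 + z2 + z3) / 3%:R + w * ((z1 * z2 + z2 * z3 + z3 * z1) / 3%:R), w * (z1 * z2 * z3))
   = (u1 + u2, u1 * u2).
Proof.
move=> hw h1 h2 h3.
set s := _ + _; set P := w * _.
have h3p : (0 : C) < 3%:R by rewrite ltr0n.
have hPn : `|P| = `|z1| * `|z2| * `|z3| by rewrite /P !normrM hw mul1r.
have m23 : `|z2 * z3| < 1 by rewrite normrM mulr_ilt1.
have m31 : `|z3 * z1| < 1 by rewrite normrM mulr_ilt1.
have m12 : `|z1 * z2| < 1 by rewrite normrM mulr_ilt1.
have hlt : `|P| < 1.
  rewrite hPn -mulrA -normrM; apply: mulr_ilt1 => //.
apply: from_bound_open => //.
have D := decomp z1 z2 z3 w hw; rewrite /= -/s -/P in D.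
rewrite -(ltr_pM2l h3p) -[X in X * `|_|](ger0_norm (ltW h3p)) -normrM D.
have T1 := term_lt _ _ _ hw h1 m23.
have T2 := term_lt _ _ _ hw h2 m31.
have T3 := term_lt _ _ _ hw h3 m12.
rewrite !normrM (_ : `|z1| * (`|z2| * `|z3|) = `|P|) in T1; last by rewrite hPn mulrA.
rewrite !normrM (_ : `|z2| * (`|z3| * `|z1|) = `|P|) in T2; last by rewrite hPn; ring.
rewrite !normrM (_ : `|z3| * (`|z1| * `|z2|) = `|P|) in T3; last by rewrite hPn; ring.
apply: le_lt_trans (ler_normD _ _) _.
rewrite (_ : 3%:R * (1 - `|P| ^+ 2) = (1 - `|P| ^+ 2) + (1 - `|P| ^+ 2) + (1 - `|P| ^+ 2)); last by ring.
apply: ltrD => //; apply: le_lt_trans (ler_normD _ _) _; exact: ltrD.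
Qed.

End Gen.

Theorem mainTheorem15 (R : realType) (s1 s2 p w : R[i]) :
  `|w| = 1 ->
  (Gamma3 (s1, s2, p) -> Gamma2 (s1 / 3%:R + w * (s2 / 3%:R), w * p)) /\
  (G3 (s1, s2, p) -> G2 (s1 / 3%:R + w * (s2 / 3%:R), w * p)).
Proof.
move=> hw; split.
  case=> z1 [z2 [z3 [h1 [h2 [h3 E]]]]]; case: E => -> -> ->.
  exact: (@main_closed R[i] z1 z2 z3 w hw h1 h2 h3).
case=> z1 [z2 [z3 [h1 [h2 [h3 E]]]]]; case: E => -> -> ->.
exact: (@main_open R[i] z1 z2 z3 w hw h1 h2 h3).
Qed.
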